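(* Let $T_k=M_1M_2\cdots M_k$. Then $\delta(T_k)$ converges to $0$ almost surely as $k\to\infty$.
   Context: Let $\mathcal{G}=(\mathcal{V},\mathcal{E})$ be a strongly connected directed graph with $\mathcal{V}=\{1,\dots,m\}$, with a self-loop $(i,i)\in\mathcal{E}$ at every node. Let $\mathcal{O}_i=\{j:(i,j)\in\mathcal{E}\}$ and $D_i=|\mathcal{O}_i|$. At each time step $k\ge1$ each link $(i,j)\in\mathcal{E}$ is reliable with probability $q_{ij}\in(0,1]$, independently across links and across time steps; let $X_k[i,j]=1$ if $(i,j)$ is reliable at step $k$ and $0$ otherwise. Let $n=m+|\mathcal{E}|$ and index rows/columns of $n\times n$ matrices by $\mathcal{V}\cup\mathcal{E}$. The random matrix $M_k$ is defined by: for $i\in\mathcal{V}$ and $(i,j)\in\mathcal{E}$, $M_k[i,j]=X_k[i,j]/D_i$ and $M_k[i,(i,j)]=(1-X_k[i,j])/D_i$, all other entries of row $i$ being $0$; for $(i,j)\in\mathcal{E}$, $M_k[(i,j),j]=X_k[i,j]$ and $M_k[(i,j),(i,j)]=1-X_k[i,j]$, all other entries of row $(i,j)$ being $0$. For a row stochastic matrix $A$, $\delta(A)=\max_j\max_{i_1,i_2}|A[i_1,j]-A[i_2,j]|$. *)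

(* Defs.v *)
From HB Require Import structures.
From mathcomp Require Import all_boot all_order all_algebra.
From mathcomp Require Import all_classical all_reals all_analysis.
Set Implicit Arguments. Unset Strict Implicit. Unset Printing Implicit Defensive.
Import Order.TTheory GRing.Theory Num.Theory.
Import numFieldNormedType.Exports.
Local Open Scope classical_set_scope.
Local Open Scope ring_scope.

Definition strongly_connected m (E : rel 'I_m) : Prop :=
  forall i j : 'I_m, connect E i j.

Definition self_loops m (E : rel 'I_m) : Prop := forall i : 'I_m, E i i.

Notation edge m E := ({p : 'I_m * 'I_m | E p.1 p.2}).
(* Index set V \cup E of the n x n matrices, n = m + |E|. *)
Notation idx m E := ('I_m + edge m E)%type.

(* out-degree D_i = |O_i| (the self-loop counts) *)
Definition outdeg m (E : rel 'I_m) (i : 'I_m) : nat := #|[pred j | E i j]|.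

Definition mutually_independent d (T : measurableType d) (R : realType)
  (P : probability T R) (I : eqType) (A : I -> set T) : Prop :=
  forall s : seq I, uniq s ->
    P (\bigcap_(i in [set x | x \in s]) A i) = (\prod_(i <- s) P (A i))%E.

Section Model.
Variables (R : realType) (d : measure_display) (T : measurableType d).
Variables (m : nat) (E : rel 'I_m).
(* Rel t e = event "link e is reliable at time step t+1" *)
Variable Rel : nat -> edge m E -> set T.

(* X_{t+1}[i,j] as a real number (0 if (i,j) is not a link) *)
Definition Xlink (t : nat) (i j : 'I_m) (w : T) : R :=
  match @insub _ (fun p : 'I_m * 'I_m => E p.1 p.2) _ (i, j) with
  | Some e => \1_(Rel t e) w
  | None => 0
  end.

Definition Mstep (t : nat) (w : T) (a b : idx m E) : R :=
  match a, b with
  | inl i, inl j => if E i j then Xlink t i j w / (outdeg E i)%:R else 0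
  | inl i, inr e => if (val e).1 == i then (1 - \1_(Rel t e) w) / (outdeg E i)%:R
                    else 0
  | inr e, inl j => if (val e).2 == j then \1_(Rel t e) w else 0
  | inr e, inr e' => if e == e' then 1 - \1_(Rel t e) w else 0
  end.

Definition mat_id (a b : idx m E) : R := (a == b)%:R.
Definition mat_mul (A B : idx m E -> idx m E -> R) (a b : idx m E) : R :=
  \sum_(c : idx m E) A a c * B c b.

Fixpoint Tprod (k : nat) (w : T) : idx m E -> idx m E -> R :=
  match k with
  | 0 => mat_id
  | k'.+1 => mat_mul (Tprod k' w) (Mstep k' w)
  end.
End Model.

Definition delta (R : realType) (I : finType) (A : I -> I -> R) : R :=
  \big[Num.max/0]_(j : I) \big[Num.max/0]_(i1 : I) \big[Num.max/0]_(i2 : I)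
     `|A i1 j - A i2 j|.

(* Main.v *)
Require Import Defs.
From HB Require Import structures.
From mathcomp Require Import all_boot all_order all_algebra.
From mathcomp Require Import all_classical all_reals all_analysis.
From mathcomp Require Import ring lra.
Set Implicit Arguments. Unset Strict Implicit. Unset Printing Implicit Defensive.
Import Order.TTheory GRing.Theory Num.Theory.
Import numFieldNormedType.Exports.
Local Open Scope classical_set_scope.
Local Open Scope ring_scope.
Section Mat.
Variables (R : realType) (I : finType).
Implicit Types A B C : I -> I -> R.

Definition mm A B (a b : I) : R := \sum_(c : I) A a c * B c b.
Definition mid (a b : I) : R := (a == b)%:R.
Definition stoch A := (forall a b, 0 <= A a b) /\ (forall a, \sum_b A a b = 1).

Lemma mmA A B C a b : mm A (mm B C) a b = mm (mm A B) C a b.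
Proof.
rewrite /mm.
under eq_bigr => c _ do rewrite big_distrr /=.
rewrite exchange_big /=; apply: eq_bigr => c _.
rewrite big_distrl /=; apply: eq_bigr => c' _; by rewrite mulrA.
Qed.

Lemma stoch_mm A B : stoch A -> stoch B -> stoch (mm A B).
Proof.
move=> [A0 A1] [B0 B1]; split.
  by move=> a b; apply: sumr_ge0 => c _; rewrite mulr_ge0.
move=> a; rewrite /mm exchange_big /=.
rewrite -(A1 a); apply: eq_bigr => c _; by rewrite -big_distrr /= B1 mulr1.
Qed.

Lemma stoch_mid : stoch mid.
Proof.
split; first by move=> a b; rewrite /mid ler0n.
move=> a; rewrite (bigD1 a) //= /mid eqxx big1 ?addr0 // => b /negbTE.
by rewrite eq_sym => ->.
Qed.

Lemma stoch_le1 A a b : stoch A -> A a b <= 1.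
Proof.
move=> [A0 A1]; rewrite -(A1 a) (bigD1 b) //= lerDl.
by apply: sumr_ge0 => c _.
Qed.

Lemma delta_ge0 A : 0 <= delta A.
Proof. by rewrite /delta; apply: bigmax_ge_id. Qed.

Lemma delta_le A x : 0 <= x -> (forall i1 i2 j, `|A i1 j - A i2 j| <= x) -> delta A <= x.
Proof.
move=> x0 H; rewrite /delta.
apply: bigmax_le => // j _; apply: bigmax_le => // i1 _; apply: bigmax_le => // i2 _.
Qed.

Lemma delta_ge A i1 i2 j : `|A i1 j - A i2 j| <= delta A.
Proof.
rewrite /delta.
apply: le_trans (le_bigmax _ _ j).
apply: le_trans (le_bigmax _ _ i1).
exact: (le_bigmax _ _ i2).
Qed.

Lemma delta_stoch_le1 A : stoch A -> delta A <= 1.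
Proof.
move=> sA; apply: delta_le => // i1 i2 j.
have := @stoch_le1 A i1 j sA; have := @stoch_le1 A i2 j sA.
case: sA => A0 _; have := A0 i1 j; have := A0 i2 j.
move=> *; rewrite ler_norml; apply/andP; split; lra.
Qed.

Lemma conv_bound (w x : I -> R) lo hi s :
  (forall k, 0 <= w k) -> \sum_k w k = s -> (forall k, lo <= x k <= hi) ->
  s * lo <= \sum_k w k * x k <= s * hi.
Proof.
move=> w0 ws xb; rewrite -ws !big_distrl /=; apply/andP; split;
  apply: ler_sum => k _; apply: (@ler_wpM2l R (w k) (w0 k));
  by case/andP: (xb k).
Qed.

Lemma contract A X c c0 : stoch A -> 0 <= c -> (forall a, c <= A a c0) ->
  delta (mm A X) <= (1 - c) * delta X.
Proof.
move=> [A0 A1] c0p Ac.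
have c1 : c <= 1 by apply: le_trans (Ac c0) (@stoch_le1 A _ _ (conj A0 A1)).
apply: delta_le; first by rewrite mulr_ge0 ?delta_ge0 // subr_ge0.
move=> i1 i2 j.
pose x k := X k j.
have [kmin _ Hmin] := @arg_minP _ _ I c0 predT x isT.
have [kmax _ Hmax] := @arg_maxP _ _ I c0 predT x isT.
pose lo := x kmin; pose hi := x kmax.
have xb : forall k, lo <= x k <= hi.
  by move=> k; rewrite /lo /hi Hmin //=; apply: Hmax.
have hl : hi - lo <= delta X.
  exact: le_trans (ler_norm _) (delta_ge X kmax kmin j).
pose w a k := A a k - (k == c0)%:R * c.
have w0 : forall a k, 0 <= w a k.
  move=> a k; rewrite /w; case: eqP => [->|_]; rewrite ?mul1r ?mul0r ?subr0 ?subr_ge0 //.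
have ws : forall a, \sum_k w a k = 1 - c.
  move=> a; rewrite /w sumrB A1 (bigD1 c0) //= eqxx mul1r big1 ?addr0 //.
  by move=> k /negbTE ->; rewrite mul0r.
have e : \sum_k (k == c0)%:R * c * x k = c * x c0.
  rewrite (bigD1 c0) //= eqxx mul1r big1 ?addr0 // => k /negbTE ->.
  by rewrite !mul0r.
have decomp : forall a, mm A X a j = c * x c0 + \sum_k w a k * x k.
  move=> a; rewrite /w.
  under [X in _ = _ + X]eq_bigr => k _ do rewrite mulrBl.
  rewrite sumrB e /mm /x; ring.
rewrite !decomp.
have := @conv_bound (w i1) x lo hi _ (w0 i1) (ws i1) xb; have := @conv_bound (w i2) x lo hi _ (w0 i2) (ws i2) xb.
move=> /andP[h1 h2] /andP[h3 h4].
have hc : 0 <= 1 - c by rewrite subr_ge0.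
have : (1 - c) * (hi - lo) <= (1 - c) * delta X by rewrite ler_wpM2l.
move=> h5; rewrite ler_norml; apply/andP; split; nra.
Qed.

End Mat.
Section Model2.
Variables (R : realType) (d : measure_display) (T : measurableType d).
Variables (m : nat) (E : rel 'I_m).
Variable Rel : nat -> edge m E -> set T.
Local Notation M := (@Mstep R d T m E Rel).
Local Notation EI := (edge m E).
Local Notation ID := (idx m E).

Lemma sum_if_eq (I : finType) (a : I) (x : R) :
  \sum_(j : I) (if a == j then x else 0) = x.
Proof.
rewrite (bigD1 a) //= eqxx big1 ?addr0 // => j /negbTE.
by rewrite eq_sym => ->.
Qed.

Lemma sum_edge_row (g : EI -> R) (i : 'I_m) :
  \sum_(j : 'I_m) (match @insub _ (fun p : 'I_m * 'I_m => E p.1 p.2) EI (i, j) with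
                   | Some e => g e | None => 0 end)
  = \sum_(e : EI) (if (val e).1 == i then g e else 0).
Proof.
have -> : \sum_(e : EI) (if (val e).1 == i then g e else 0) =
    \sum_(e : EI) \sum_(j : 'I_m) (if val e == (i, j) then g e else 0).
  apply: eq_bigr => e _.
  case: eqP => [h1|h1].
    rewrite (bigD1 (val e).2) //= big1.
      by rewrite -h1 -surjective_pairing eqxx addr0.
    move=> j hj; case: eqP => // h2; move: hj; rewrite h2 /= eqxx //.
  rewrite big1 // => j _; case: eqP => // h2; by rewrite h2 in h1.
rewrite exchange_big /=; apply: eq_bigr => j _.
case: insubP => [e0 P0 ve0|nP].
  rewrite (bigD1 e0) //= ve0 eqxx big1 ?addr0 // => e hne.
  case: eqP => // h; move: hne; rewrite -ve0 in h; by rewrite (val_inj h) eqxx.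
rewrite big1 // => e _; case: eqP => // h.
by move: nP; rewrite -h (valP e).
Qed.

Lemma insub_edge (i j : 'I_m) :
  @insub _ (fun p : 'I_m * 'I_m => E p.1 p.2) EI (i, j) = None -> ~~ E i j.
Proof. by case: insubP => //= [e0 P0 _ //|nP _]. Qed.

Lemma indic01 (A : set T) w : (\1_A w = 0 :> R) \/ (\1_A w = 1 :> R).
Proof. by rewrite indicE; case: (w \in A); [right|left]. Qed.

Lemma indic_ge0 (A : set T) w : 0 <= (\1_A w : R).
Proof. by rewrite indicE ler0n. Qed.

Lemma indic_le1 (A : set T) w : (\1_A w : R) <= 1.
Proof. by rewrite indicE; case: (w \in A); rewrite ?ler01 ?lexx. Qed.

Lemma outdeg_sum (i : 'I_m) :
  (outdeg E i)%:R = \sum_(e : EI) (if (val e).1 == i then 1 else 0) :> R.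
Proof.
rewrite -sum_edge_row /outdeg -sum1_card natr_sum.
rewrite big_mkcond /=; apply: eq_bigr => j _ /=; rewrite inE.
case: insubP => [e0 P0 _ | nP]; first by rewrite P0.
by rewrite (negbTE nP).
Qed.

Lemma stoch_M t w : self_loops E -> stoch (M t w).
Proof.
move=> sl; split.
  move=> [i|e] [j|e'] /=.
  - case: ifP => // _; apply: divr_ge0 => //; rewrite /Xlink.
    by case: insubP => // e0 _ _; exact: indic_ge0.
  - case: ifP => // _; apply: divr_ge0 => //; rewrite subr_ge0; exact: indic_le1.
  - case: ifP => // _; exact: indic_ge0.
  - case: ifP => // _; rewrite subr_ge0; exact: indic_le1.
move=> [i|e]; rewrite big_sumType /=.
- have D0 : (outdeg E i)%:R != 0 :> R.
    rewrite pnatr_eq0 -lt0n /outdeg; apply/card_gt0P; exists i; by rewrite inE sl.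
  have -> : \sum_(j : 'I_m) (if E i j then @Xlink R d T m E Rel t i j w / (outdeg E i)%:R else 0)
     = \sum_(j : 'I_m) (match @insub _ (fun p : 'I_m * 'I_m => E p.1 p.2) EI (i, j) with
                   | Some e => \1_(Rel t e) w / (outdeg E i)%:R | None => 0 end).
    apply: eq_bigr => j _; rewrite /Xlink.
    case: insubP => [e0 P0 _ | nP]; first by rewrite P0.
    by rewrite (negbTE nP).
  rewrite sum_edge_row -big_split /=.
  have -> : \sum_(e : EI) ((if (val e).1 == i then \1_(Rel t e) w / (outdeg E i)%:R else 0) +
      (if (val e).1 == i then (1 - \1_(Rel t e) w) / (outdeg E i)%:R else 0))
     = (\sum_(e : EI) (if (val e).1 == i then 1 else 0)) / (outdeg E i)%:R :> R.
    rewrite big_distrl /=; apply: eq_bigr => e _.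
    case: ifP => _; last by rewrite addr0 mul0r.
    by rewrite -mulrDl addrC subrK.
  by rewrite -outdeg_sum divff.
- rewrite sum_if_eq.
  have -> : \sum_(e' : EI) (if e == e' then 1 - \1_(Rel t e) w else 0) = 1 - \1_(Rel t e) w :> R.
    exact: sum_if_eq.
  by rewrite addrC subrK.
Qed.

Fixpoint Tseg (s n : nat) (w : T) : ID -> ID -> R :=
  match n with
  | 0 => @mid R ID
  | n'.+1 => mm (Tseg s n' w) (M (s + n') w)
  end.

Lemma mm_mid_r (I : finType) (A : I -> I -> R) : mm A (@mid R I) = A.
Proof.
apply/funext => a; apply/funext => b; rewrite /mm /mid (bigD1 b) //= eqxx mulr1.
by rewrite big1 ?addr0 // => c /negbTE ->; rewrite mulr0.
Qed.

Lemma mm_mid_l (I : finType) (A : I -> I -> R) : mm (@mid R I) A = A.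
Proof.
apply/funext => a; apply/funext => b; rewrite /mm /mid (bigD1 a) //= eqxx mul1r.
by rewrite big1 ?addr0 // => c; rewrite eq_sym => /negbTE ->; rewrite mul0r.
Qed.

Lemma mmA_f (I : finType) (A B C : I -> I -> R) : mm A (mm B C) = mm (mm A B) C.
Proof. by apply/funext => a; apply/funext => b; apply: mmA. Qed.

Lemma Tseg_split s a n w : Tseg s (a + n) w = mm (Tseg s a w) (Tseg (s + a) n w).
Proof.
elim: n => [|n IH]; first by rewrite addn0 /= mm_mid_r.
by rewrite addnS /= IH -mmA_f addnA.
Qed.

Lemma Tprod_seg k w : @Tprod R d T m E Rel k w = Tseg 0 k w.
Proof. by elim: k => //= k ->. Qed.

Lemma Tseg_S s n w : Tseg s n.+1 w = mm (M s w) (Tseg s.+1 n w).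
Proof.
rewrite -add1n Tseg_split /= mm_mid_l addn0 addn1 //.
Qed.

Lemma stoch_Tseg s n w : self_loops E -> stoch (Tseg s n w).
Proof.
move=> sl; elim: n => [|n IH] /=; first exact: stoch_mid.
by apply: stoch_mm => //; exact: stoch_M.
Qed.

End Model2.
Section Reach.
Variables (R : realType) (d : measure_display) (T : measurableType d).
Variables (m : nat) (E : rel 'I_m).
Variable Rel : nat -> edge m E -> set T.
Hypothesis sl : self_loops E.
Local Notation M := (@Mstep R d T m E Rel).
Local Notation EI := (edge m E).
Local Notation ID := (idx m E).
Local Notation TS := (@Tseg R d T m E Rel).

Lemma M_node t w i j : (forall e, Rel t e w) -> E i j ->
  M t w (inl i) (inl j) = (outdeg E i)%:R^-1.
Proof.
move=> g Eij /=; rewrite Eij /Xlink.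
case: insubP => [e0 _ _|nP]; last by rewrite Eij in nP.
by rewrite indicE mem_set ?mul1r // g.
Qed.

Lemma M_edge t w e : (forall e, Rel t e w) -> M t w (inr e) (inl (val e).2) = 1.
Proof. by move=> g /=; rewrite eqxx indicE mem_set // g. Qed.

Lemma outdeg_gt0 i : (0 < outdeg E i)%N.
Proof. by rewrite /outdeg; apply/card_gt0P; exists i; rewrite inE sl. Qed.

Lemma invm_le i : (m%:R : R)^-1 <= (outdeg E i)%:R^-1.
Proof.
have h1 := outdeg_gt0 i.
have h2 : (outdeg E i <= m)%N.
  by rewrite /outdeg; apply: leq_trans (max_card _) _; rewrite card_ord.
rewrite lef_pV2 ?posrE ?ltr0n ?ler_nat //; exact: leq_trans h2.
Qed.

Lemma mm_ge (I : finType) (A B : I -> I -> R) a b c :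
  (forall x y, 0 <= A x y) -> (forall x y, 0 <= B x y) ->
  A a c * B c b <= mm A B a b.
Proof.
move=> A0 B0; rewrite /mm (bigD1 c) //= lerDl.
by apply: sumr_ge0 => k _; rewrite mulr_ge0.
Qed.

Lemma reach (j0 : 'I_m) n : forall s i w,
  (forall t, (s <= t < s + n)%N -> forall e, Rel t e w) ->
  (exists p, [/\ path E i p, last i p = j0 & (size p <= n)%N]) ->
  (m%:R^-1)^+n <= TS s n w (inl i) (inl j0).
Proof.
elim: n => [|n IH] s i w g [p [pp lp sp]].
  case: p pp lp sp => //= _ -> _; by rewrite /mid eqxx expr0.
have gs : forall e, Rel s e w by apply: g; rewrite leqnn /= addnS ltnS leq_addr.
have g' : forall t, (s.+1 <= t < s.+1 + n)%N -> forall e, Rel t e w.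
  move=> t /andP[h1 h2]; apply: g; rewrite (ltnW h1) /=; by rewrite addnS -addSn.
have [A0 _] := @stoch_M R d T m E Rel s w sl.
have [B0 _] := @stoch_Tseg R d T m E Rel s.+1 n w sl.
rewrite Tseg_S.
have mpos : 0 <= (m%:R : R)^-1 by rewrite invr_ge0.
case: p pp lp sp => [|i1 p'] /= pp lp sp.
  apply: le_trans (mm_ge (inl i) (inl j0) (inl i) A0 B0); rewrite exprS M_node // ?sl //.
  apply: ler_pM; [exact: mpos|exact: exprn_ge0|exact: invm_le|].
  apply: IH => //; exists [::]; by rewrite /= lp.
move/andP: pp => [Ei1 pp].
apply: le_trans (mm_ge (inl i) (inl j0) (inl i1) A0 B0); rewrite exprS M_node //.
apply: ler_pM; [exact: mpos|exact: exprn_ge0|exact: invm_le|].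
apply: IH => //; by exists p'.
Qed.

End Reach.
Section Block.
Variables (R : realType) (d : measure_display) (T : measurableType d).
Variables (m : nat) (E : rel 'I_m).
Variable Rel : nat -> edge m E -> set T.
Hypothesis sl : self_loops E.
Hypothesis sc : strongly_connected E.
Local Notation M := (@Mstep R d T m E Rel).
Local Notation TS := (@Tseg R d T m E Rel).

Lemma path_exists (i j0 : 'I_m) :
  exists p, [/\ path E i p, last i p = j0 & (size p <= m.-1)%N].
Proof.
have /connectP [p pp lp] := sc i j0.
move: lp => ->; case: (shortenP pp) => p' pp' up' _.
exists p'; split => //.
have hc := card_uniqP up'.
have h2 : ((size p').+1 <= m)%N.
  have := max_card (mem (i :: p')); rewrite card_ord hc //.
by rewrite -ltnS prednK // (leq_trans _ h2).
Qed.

Lemma block_pos (j0 : 'I_m) n s w : (m.-1 <= n)%N ->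
  (forall t, (s <= t < s + n.+1)%N -> forall e, Rel t e w) ->
  forall a, (m%:R^-1)^+n.+1 <= TS s n.+1 w a (inl j0).
Proof.
move=> hn g [i|e].
  apply: reach => //; have [p [pp lp sp]] := path_exists i j0.
  by exists p; split => //; apply: leq_trans sp (leq_trans hn _).
have m0 : (0 < m)%N by case: (m) j0 => [[]|].
have gs : forall e, Rel s e w by apply: g; rewrite leqnn /= addnS ltnS leq_addr.
have g' : forall t, (s.+1 <= t < s.+1 + n)%N -> forall e, Rel t e w.
  move=> t /andP[h1 h2]; apply: g; rewrite (ltnW h1) /=; by rewrite addnS -addSn.
have [A0 _] := @stoch_M R d T m E Rel s w sl.
have [B0 _] := @stoch_Tseg R d T m E Rel s.+1 n w sl.
rewrite Tseg_S.
apply: le_trans (mm_ge (inr e) (inl j0) (inl (val e).2) A0 B0).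
rewrite M_edge // mul1r exprS.
have mpos : 0 <= (m%:R : R)^-1 by rewrite invr_ge0.
have m1 : (m%:R : R)^-1 <= 1 by rewrite invf_le1 ?ler1n ?ltr0n.
apply: le_trans (_ : (m%:R^-1)^+n <= _).
  by rewrite ler_piMl // exprn_ge0.
apply: reach => //; have [p [pp lp sp]] := path_exists (val e).2 j0.
by exists p; split => //; apply: leq_trans sp hn.
Qed.

End Block.
Section Det.
Variables (R : realType) (d : measure_display) (T : measurableType d).
Variables (m : nat) (E : rel 'I_m).
Variable Rel : nat -> edge m E -> set T.
Hypothesis sl : self_loops E.
Hypothesis sc : strongly_connected E.
Variable j0 : 'I_m.
Local Notation TS := (@Tseg R d T m E Rel).
Local Notation L := (m.-1).+1.
Definition good b w := forall t, (b * L <= t < b * L + L)%N -> forall e, Rel t e w.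
Local Notation c := ((m%:R : R)^-1 ^+ L).
Local Notation cnt w b r := (count (fun b' => `[< good b' w >]) (iota b r)).

Lemma c_ge0 : 0 <= c. Proof. by rewrite exprn_ge0 // invr_ge0. Qed.
Lemma c_gt0 : 0 < c.
Proof.
have m0 : (0 < m)%N by case: (m) j0 => [[]|].
by rewrite exprn_gt0 // invr_gt0 ltr0n.
Qed.
Lemma c_le1 : c <= 1.
Proof.
have m0 : (0 < m)%N by case: (m) j0 => [[]|].
by rewrite exprn_ile1 // ?invr_ge0 // invf_le1 ?ler1n ?ltr0n.
Qed.

Lemma det_bound r : forall b k w, (r * L <= k)%N ->
  delta (TS (b * L)%N k w) <= (1 - c) ^+ cnt w b r.
Proof.
elim: r => [|r IH] b k w hk.
  by rewrite expr0; apply: delta_stoch_le1; exact: stoch_Tseg.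
have -> : k = (L + (k - L))%N by rewrite subnKC // (leq_trans _ hk) // mulSn leq_addr.
rewrite Tseg_split -mulSnr.
have -> : cnt w b r.+1 = (`[< good b w >] + cnt w b.+1 r)%N by [].
have hk' : (r * L <= k - L)%N by rewrite leq_subRL ?(leq_trans _ hk) // mulSn ?leq_addr.
have IH' := IH b.+1 (k - L)%N w hk'.
have [A0 A1] := @stoch_Tseg R d T m E Rel (b * L)%N L w sl.
have h1 : 0 <= 1 - c by rewrite subr_ge0 c_le1.
case: (pselect (good b w)) => gb.
  rewrite asboolT // add1n [X in _ <= X]exprS.
  apply: le_trans (@contract R (idx m E) _ (TS (b.+1 * L)%N (k - L)%N w) c (inl j0) (conj A0 A1) c_ge0 _) _.
    move=> a; apply: block_pos => //; exact: gb.
  by rewrite ler_wpM2l.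
rewrite asboolF // add0n.
apply: le_trans (@contract R (idx m E) _ (TS (b.+1 * L)%N (k - L)%N w) 0 (inl j0) (conj A0 A1) (lexx 0) _) _.
  by move=> a; apply: A0.
by rewrite subr0 mul1r.
Qed.

Lemma cnt_unbounded w : (forall N, exists b, (N <= b)%N /\ good b w) ->
  forall J, exists r, (J <= cnt w 0 r)%N.
Proof.
move=> inf; elim => [|J [r hr]]; first by exists 0%N.
have [b [hb gb]] := inf r.
exists b.+1.
have e : b.+1 = (r + (b - r).+1)%N by rewrite addnS subnKC.
rewrite e iotaD count_cat add0n -addn1.
apply: leq_add => //.
rewrite lt0n -lt0n -has_count; apply/hasP; exists b.
  by rewrite mem_iota hb /= addnS subnKC.
by rewrite asboolT.
Qed.

Lemma det_cvg w : (forall N, exists b, (N <= b)%N /\ good b w) ->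
  (fun k => delta (@Tprod R d T m E Rel k w)) @ \oo --> (0 : R).
Proof.
move=> inf; apply/cvgr0Pnorm_lt => e e0.
have hq : `|1 - c| < 1.
  rewrite ger0_norm ?subr_ge0 ?c_le1 //; rewrite ltrBlDr ltrDl; exact: c_gt0.
have /cvgr0Pnorm_lt/(_ e e0) [J _ HJ] := cvg_expr hq.
have [r hr] := cnt_unbounded inf J.
exists (r * L)%N => // k hk /=.
rewrite Tprod_seg ger0_norm ?delta_ge0 //.
have := det_bound 0 w hk; rewrite mul0n => h.
apply: le_lt_trans h _.
have := HJ _ (leqnn J) => /=; rewrite ger0_norm ?exprn_ge0 ?subr_ge0 ?c_le1 //.
apply: le_lt_trans; rewrite ler_wiXn2l // ?subr_ge0 ?c_le1 //.
Qed.

End Det.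
Section Prob.
Variables (R : realType) (d : measure_display) (T : measurableType d).
Variable (P : probability T R).
Variables (m : nat) (E : rel 'I_m).
Variable (q : edge m E -> R).
Variable Rel : nat -> edge m E -> set T.
Hypothesis mR : forall t e, measurable (Rel t e).
Hypothesis PR : forall t e, P (Rel t e) = (q e)%:E.
Hypothesis ind : mutually_independent P (fun te : nat * edge m E => Rel te.1 te.2).
Local Notation EI := (edge m E).
Local Notation L := (m.-1).+1.
Local Notation A := (fun te : nat * EI => Rel te.1 te.2).

Definition Iset (s : seq (nat * EI)) : set T :=
  \bigcap_(i in [set x | x \in s]) A i.
Definition idxs (b : nat) : seq (nat * EI) :=
  [seq (t, e) | t <- iota (b * L)%N L, e <- enum {: EI}].
Definition G b := Iset (idxs b).
Definition J (S : seq nat) : set T := foldr (fun b X => ~` G b `&` X) setT S.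
Definition pr (X : set T) : R := fine (P X).

Lemma Iset_nil : Iset [::] = setT.
Proof. by apply/seteqP; split => w //= _ x /=; rewrite in_nil. Qed.

Lemma Iset_cons x s : Iset (x :: s) = A x `&` Iset s.
Proof.
apply/seteqP; split => w /=.
  move=> h; split; first by apply: h; rewrite /= mem_head.
  by move=> y /= ys; apply: h; rewrite /= inE ys orbT.
move=> [h1 h2] y /=; rewrite inE => /orP[/eqP ->//|ys]; exact: h2.
Qed.

Lemma Iset_cat s1 s2 : Iset (s1 ++ s2) = Iset s1 `&` Iset s2.
Proof.
elim: s1 => [|x s1 IH] /=; first by rewrite Iset_nil setTI.
by rewrite !Iset_cons IH setIA.
Qed.

Lemma mIset s : measurable (Iset s).
Proof.
elim: s => [|x s IH]; first by rewrite Iset_nil.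
by rewrite Iset_cons; apply: measurableI => //; exact: mR.
Qed.

Lemma mJ S : measurable (J S).
Proof.
elim: S => [|b S IH] //=; apply: measurableI => //; apply: measurableC; exact: mIset.
Qed.

Lemma PE X : measurable X -> P X = (pr X)%:E.
Proof. by move=> mX; rewrite /pr fineK // fin_num_measure. Qed.

Lemma pr_Iset s : uniq s -> pr (Iset s) = \prod_(x <- s) q x.2.
Proof.
move=> us; rewrite /pr /Iset ind //.
rewrite (eq_bigr (fun x => (q x.2)%:E)); last by move=> x _; exact: PR.
by rewrite prodEFin.
Qed.

Lemma prD X Y : measurable X -> measurable Y -> pr (X `\` Y) = pr X - pr (X `&` Y).
Proof.
move=> mX mY; rewrite /pr measureD //; last by rewrite ltey_eq fin_num_measure.
rewrite fineB // fin_num_measure //; exact: measurableI.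
Qed.

Lemma idxs_uniq b : uniq (idxs b).
Proof.
apply: allpairs_uniq; rewrite ?iota_uniq ?enum_uniq //.
by move=> [? ?] [? ?] _ _.
Qed.

Lemma mem_idxs b x : (x \in idxs b) = (b * L <= x.1 < b * L + L)%N.
Proof.
apply/allpairsP/idP => [[[t e] [h1 h2 ->]]|h]; first by move: h1; rewrite mem_iota.
by exists x; rewrite mem_iota h mem_enum -surjective_pairing.
Qed.

Lemma idxs_disj b b' x : b != b' -> x \in idxs b -> x \notin idxs b'.
Proof.
rewrite !mem_idxs => nb /andP[h1 h2]; apply/negP => /andP[h3 h4].
case: (ltngtP b b') nb => // hb _.
- have : (b.+1 * L <= b' * L)%N by rewrite leq_mul2r hb orbT.
  rewrite mulSnr => h; have := leq_trans h2 (leq_trans h h3); by rewrite ltnn.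
- have : (b'.+1 * L <= b * L)%N by rewrite leq_mul2r hb orbT.
  rewrite mulSnr => h; have := leq_trans h4 (leq_trans h h1); by rewrite ltnn.
Qed.

Lemma main_ind S : uniq S -> forall C, uniq C ->
  (forall b x, b \in S -> x \in C -> x \notin idxs b) ->
  pr (Iset C `&` J S) = pr (Iset C) * \prod_(b <- S) (1 - pr (G b)).
Proof.
elim: S => [|b S IH] /=.
  by move=> _ C _ _; rewrite setIT big_nil mulr1.
move=> /andP[bS uS] C uC hC.
have e1 : Iset C `&` (~` G b `&` J S) = (Iset C `&` J S) `\` G b.
  by rewrite setDE setIAC setIA.
have e2 : (Iset C `&` J S) `&` G b = Iset (C ++ idxs b) `&` J S.
  by rewrite Iset_cat setIAC.
have uC' : uniq (C ++ idxs b).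
  rewrite cat_uniq uC idxs_uniq andbT /=; apply/hasPn => x xb.
  by apply/negP => xC; have := hC b x (mem_head _ _) xC; rewrite xb.
have hC' : forall b' x, b' \in S -> x \in C ++ idxs b -> x \notin idxs b'.
  move=> b' x b'S; rewrite mem_cat => /orP[xC|xb].
    by apply: hC => //; rewrite inE b'S orbT.
  apply: idxs_disj xb; apply/eqP => eb; by rewrite eb b'S in bS.
rewrite e1 prD ?e2; last 2 first.
- by apply: measurableI; [exact: mIset|exact: mJ].
- exact: mIset.
rewrite (IH uS C uC) ?(IH uS _ uC' hC'); last first.
  by move=> b' x b'S xC; apply: hC => //; rewrite inE b'S orbT.
rewrite big_cons !pr_Iset ?idxs_uniq // big_cat /=.
ring.
Qed.

Definition pg : R := (\prod_(e : EI) q e) ^+ L.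

Lemma prod_allpairs (ts : seq nat) (es : seq EI) :
  \prod_(x <- [seq (t, e) | t <- ts, e <- es]) q x.2 = (\prod_(e <- es) q e) ^+ size ts.
Proof.
elim: ts => [|t ts IH]; first by rewrite big_nil expr0.
by rewrite /= big_cat big_map IH exprS.
Qed.

Lemma pr_G b : pr (G b) = pg.
Proof.
rewrite /G pr_Iset ?idxs_uniq // /idxs prod_allpairs size_iota /pg.
by rewrite big_enum.
Qed.

End Prob.
Section Final.
Variables (R : realType) (d : measure_display) (T : measurableType d).
Variable (P : probability T R).
Variables (m : nat) (E : rel 'I_m).
Variable (q : edge m E -> R).
Variable Rel : nat -> edge m E -> set T.
Hypothesis mR : forall t e, measurable (Rel t e).
Hypothesis PR : forall t e, P (Rel t e) = (q e)%:E.
Hypothesis ind : mutually_independent P (fun te : nat * edge m E => Rel te.1 te.2).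
Hypothesis hq : forall e, 0 < q e <= 1.
Local Notation L := (m.-1).+1.

Lemma pg_gt0 : 0 < pg q.
Proof. by rewrite /pg exprn_gt0 // prodr_gt0 // => e _; case/andP: (hq e). Qed.

Lemma pg_le1 : pg q <= 1.
Proof.
rewrite /pg exprn_ile1 ?prodr_ge0 ?prodr_ile1 // => e _; case/andP: (hq e) => // h _.
  exact: ltW.
by case/andP: (hq e) => h1 h2; rewrite ltW.
Qed.

Lemma J_mem S w : (forall b, b \in S -> ~ G Rel b w) -> J Rel S w.
Proof.
elim: S => [|b S IH] //= h; split; first by apply: h; rewrite mem_head.
by apply: IH => b' b'S; apply: h; rewrite inE b'S orbT.
Qed.

Lemma prod_const_seq (s : seq nat) (x : R) : \prod_(b <- s) x = x ^+ size s.
Proof. elim: s => [|b s IH]; by rewrite ?big_nil ?big_cons ?IH ?exprS. Qed.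

Lemma null_tail N : P (\bigcap_(b in [set b | (N <= b)%N]) ~` G Rel b) = 0%E.
Proof.
set X := \bigcap_(b in _) _.
have mX : measurable X.
  apply: bigcap_measurableType => b _; apply: measurableC; exact: mIset.
have bound : forall K, pr P X <= (1 - pg q) ^+ K.
  move=> K.
  have sub : X `<=` J Rel (iota N K).
    move=> w Xw; apply: J_mem => b; rewrite mem_iota => /andP[hb _]; exact: Xw.
  have h : (P X <= P (J Rel (iota N K)))%E.
    exact: (le_measure P (mem_set mX) (mem_set (mJ mR (iota N K))) sub).
  move: h; rewrite (PE P mX) (PE P (mJ mR _)).
  rewrite lee_fin => h; apply: le_trans h _.
  have := @main_ind R d T P m E q Rel mR PR ind (iota N K) (iota_uniq _ _) [::] isT
    (fun b x _ xn => match notF xn with end).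
  rewrite Iset_nil setTI => ->.
  under eq_bigr => b _ do rewrite (pr_G PR ind).
  rewrite {1}/pr probability_setT /= mul1r.
  by rewrite prod_const_seq size_iota.
have x0 : 0 <= pr P X by rewrite /pr fine_ge0 // measure_ge0.
have : pr P X = 0.
  apply/eqP; rewrite eq_le x0 andbT; apply/negP => /negP; rewrite -ltNge => xp.
  have hq' : `|1 - pg q| < 1.
    rewrite ger0_norm ?subr_ge0 ?pg_le1 // ltrBlDr ltrDl; exact: pg_gt0.
  have /cvgr0Pnorm_lt/(_ _ xp) [K _ HK] := cvg_expr hq'.
  have := HK _ (leqnn K); rewrite /= ger0_norm ?exprn_ge0 ?subr_ge0 ?pg_le1 //.
  by rewrite ltNge bound.
by move=> h; rewrite (PE P mX) h.
Qed.

End Final.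

Theorem lemma3 (R : realType) (d : measure_display) (T : measurableType d)
  (P : probability T R) (m : nat) (E : rel 'I_m)
  (q : edge m E -> R) (Rel : nat -> edge m E -> set T) :
  strongly_connected E ->
  self_loops E ->
  (forall e, 0 < q e <= 1) ->
  (forall t e, measurable (Rel t e)) ->
  (forall t e, P (Rel t e) = (q e)%:E) ->
  mutually_independent P (fun te : nat * edge m E => Rel te.1 te.2) ->
  {ae P, forall w, (fun k => delta (@Tprod R d T m E Rel k w)) @ \oo --> (0 : R)}.
Proof.
move=> sc sl hq mR PR ind.
case: (posnP m) => [m0|mpos].
  apply: aeW => w.
  have -> : (fun k => delta (@Tprod R d T m E Rel k w)) = fun _ => 0.
    apply/funext => k; apply/eqP; rewrite eq_le delta_ge0 andbT.
    apply: delta_le => // -[i|e]; exfalso.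
      by have h := ltn_ord i; rewrite [X in (_ < X)%N]m0 in h.
    by have h := ltn_ord (val e).1; rewrite [X in (_ < X)%N]m0 in h.
  exact: cvg_cst.
pose j0 : 'I_m := Ordinal mpos.
have nB : P.-negligible (\bigcup_N \bigcap_(b in [set b | (N <= b)%N]) ~` G Rel b).
  apply: negligible_bigcup => N.
  exists (\bigcap_(b in [set b | (N <= b)%N]) ~` G Rel b); split => //.
    apply: bigcap_measurableType => b _; apply: measurableC; exact: mIset.
  exact: (null_tail mR PR ind hq).
case: nB => A' [mA' PA' BA'].
exists A'; split => // w /= nQ; apply: BA'.
apply: contrapT => nBw; apply: nQ.
apply: (det_cvg sl sc j0) => N.
apply: contrapT => nex; apply: nBw; exists N => // b hb Gb; apply: nex.
exists b; split => // t ht e.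
have := Gb (t, e); apply; by rewrite /= mem_idxs.
Qed.
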